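(* Let $n=2k$ be a positive even integer, let $f$ be a bent Boolean function on $\mathbb{F}_{2^n}$, and let $a_1,a_2,a_3\in\mathbb{F}_{2^n}$. Put $f_i(x)=f(x)+\mathrm{Tr}^n_1(a_ix)$ for $i=1,2,3$ and $$\sigma=f_1f_2+f_1f_3+f_2f_3=f(x)+\mathrm{Tr}^n_1(a_1x)\mathrm{Tr}^n_1(a_2x)+\mathrm{Tr}^n_1(a_1x)\mathrm{Tr}^n_1(a_3x)+\mathrm{Tr}^n_1(a_2x)\mathrm{Tr}^n_1(a_3x).$$ Then $\sigma$ is bent if and only if $D_{a_1+a_2}D_{a_1+a_3}f^*=0$, and $\sigma$ is semi-bent if and only if $D_{a_1+a_2}D_{a_1+a_3}f^*=1$ (the constant function $1$). If $\sigma$ is bent, then $$\sigma^*(x)=f^*(x+a_1)f^*(x+a_2)+f^*(x+a_1)f^*(x+a_3)+f^*(x+a_2)f^*(x+a_3).$$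
   Context: For a Boolean function $f:\mathbb{F}_{2^n}\to\mathbb{F}_2$, $W_f(a)=\sum_{x}(-1)^{f(x)+\mathrm{Tr}^n_1(ax)}$ with $\mathrm{Tr}^n_1(x)=\sum_{i=0}^{n-1}x^{2^i}$. $f$ is bent if $|W_f(a)|=2^{n/2}$ for all $a$, and its dual $f^*$ is defined by $W_f(a)=2^{n/2}(-1)^{f^*(a)}$. $f$ is semi-bent if $W_f$ takes values in $\{0,\pm2^{n/2+1}\}$. Derivatives: $D_af(x)=f(x)+f(x+a)$ and $D_aD_bf(x)=f(x)+f(x+a)+f(x+b)+f(x+a+b)$. *)

(* Defs.v *)
From HB Require Import structures.
From mathcomp Require Import all_boot all_order all_algebra all_field.
Set Implicit Arguments. Unset Strict Implicit. Unset Printing Implicit Defensive.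
Import GRing.Theory Num.Theory.
Local Open Scope ring_scope.

(* Boolean functions F -> F_2 are represented as F -> bool; F_2-addition is xor
   (addb, notation (+)) and F_2-multiplication is &&. *)

(* Absolute trace Tr^n_1(x) = sum_{i<n} x^(2^i), an element of F (in {0,1}
   when #|F| = 2^n); we read it in F_2 = bool. *)
Definition trF (F : finFieldType) (n : nat) (x : F) : F := \sum_(i < n) x ^+ (2 ^ i).
Definition tr (F : finFieldType) (n : nat) (x : F) : bool := trF n x == 1.

Definition walsh (F : finFieldType) (n : nat) (f : F -> bool) (a : F) : int :=
  \sum_(x : F) (-1) ^+ (nat_of_bool (f x (+) tr n (a * x))).

Definition bent (F : finFieldType) (n k : nat) (f : F -> bool) : Prop :=
  forall a : F, `|walsh n f a| = (2 ^ k)%:Z.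

Definition semibent (F : finFieldType) (n k : nat) (f : F -> bool) : Prop :=
  forall a : F, walsh n f a = 0 \/ walsh n f a = (2 ^ k.+1)%:Z
                \/ walsh n f a = - (2 ^ k.+1)%:Z.

(* dual: W_f(a) = 2^k (-1)^(f^*(a)); i.e. f^*(a) = 1 iff W_f(a) < 0
   (meaningful when f is bent). *)
Definition dual (F : finFieldType) (n : nat) (f : F -> bool) (a : F) : bool :=
  walsh n f a < 0.

Definition D (F : finFieldType) (a : F) (f : F -> bool) (x : F) : bool :=
  f x (+) f (x + a).
Definition DD (F : finFieldType) (a b : F) (f : F -> bool) (x : F) : bool :=
  f x (+) f (x + a) (+) f (x + b) (+) f (x + a + b).

Definition fi (F : finFieldType) (n : nat) (f : F -> bool) (a : F) (x : F) : bool :=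
  f x (+) tr n (a * x).
Definition sigma (F : finFieldType) (n : nat) (f : F -> bool) (a1 a2 a3 : F)
  (x : F) : bool :=
  (fi n f a1 x && fi n f a2 x) (+) (fi n f a1 x && fi n f a3 x)
    (+) (fi n f a2 x && fi n f a3 x).

(* Main.v *)
Require Import Defs.
From HB Require Import structures.
From mathcomp Require Import all_boot all_order all_algebra all_field ring.
Import Order.TTheory GRing.Theory Num.Theory.
Local Open Scope ring_scope.

Section Tr.
Variables (F : finFieldType) (n : nat).
Hypotheses (n0 : (0 < n)%N) (hF : #|F| = (2 ^ n)%N).

Lemma ch2 : (2%N \in [pchar F]).
Proof. exact: card_finPcharP hF _. Qed.

Lemma addxx (x : F) : x + x = 0.
Proof. exact: (addrr_pchar2 ch2). Qed.

Lemma sq_add (x y : F) : (x + y) ^+ 2 = x ^+ 2 + y ^+ 2.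
Proof.
by rewrite sqrrD mulr2n addxx addr0.
Qed.

Lemma pow_add i (x y : F) : (x + y) ^+ (2 ^ i) = x ^+ (2 ^ i) + y ^+ (2 ^ i).
Proof.
elim: i => [|i IH]; first by rewrite !expr1.
by rewrite expnSr !exprM IH sq_add.
Qed.

Lemma trF_add (x y : F) : trF n (x + y) = trF n x + trF n y.
Proof. by rewrite /trF -big_split /=; apply: eq_bigr => i _; rewrite pow_add. Qed.

Lemma trF_sq (x : F) : trF n x ^+ 2 = trF n x.
Proof.
have sqs : forall (m : nat) (g : 'I_m -> F), (\sum_(i < m) g i) ^+ 2 = \sum_(i < m) g i ^+ 2.
  move=> m g; elim: m g => [|m IH] g; first by rewrite !big_ord0 expr0n.
  by rewrite !big_ord_recr /= sq_add IH.
rewrite /trF sqs.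
have -> : \sum_(i < n) (x ^+ (2 ^ i)) ^+ 2 = \sum_(i < n) x ^+ (2 ^ i.+1).
  by apply: eq_bigr => i _; rewrite -exprM expnSr.
case: n n0 hF => // m _ hF'.
rewrite [RHS]big_ord_recl big_ord_recr /= -hF' expf_card expn0 expr1 addrC.
by congr (_ + _); apply: eq_bigr => i _.
Qed.

Lemma trF01 (x : F) : trF n x = 0 \/ trF n x = 1.
Proof.
have h : trF n x * (trF n x - 1) == 0 by rewrite mulrBr mulr1 -expr2 trF_sq subrr.
by move: h; rewrite mulf_eq0 subr_eq0 => /orP[/eqP|/eqP]; [left|right].
Qed.

Lemma tr_add (x y : F) : tr n (x + y) = tr n x (+) tr n y.
Proof.
rewrite /tr trF_add.
have o : (1 : F) != 0 := oner_neq0 _.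
case: (trF01 x) => ->; case: (trF01 y) => ->;
  rewrite ?addr0 ?add0r ?addxx ?eqxx ?(negPf o) // eq_sym (negPf o) //.
Qed.
End Tr.

Definition sg (b : bool) : int := (-1) ^+ b.
Definition S4 (b1 b2 b3 b4 : bool) : int := sg b1 + sg b2 + sg b3 - sg b4.

Lemma pw (b1 b2 b3 b4 : bool) :
  [/\ (`|S4 b1 b2 b3 b4| == 2) = ~~ (b1 (+) b2 (+) b3 (+) b4),
      [|| S4 b1 b2 b3 b4 == 0, S4 b1 b2 b3 b4 == 4 | S4 b1 b2 b3 b4 == -4] = (b1 (+) b2 (+) b3 (+) b4) &
      ~~ (b1 (+) b2 (+) b3 (+) b4) -> (S4 b1 b2 b3 b4 < 0) = ((b1 && b2) (+) (b1 && b3) (+) (b2 && b3))].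
Proof. by case: b1; case: b2; case: b3; case: b4. Qed.

Lemma pw2 (f s t1 t2 t3 : bool) :
  2 * sg ((((f (+) t1) && (f (+) t2)) (+) ((f (+) t1) && (f (+) t3)) (+) ((f (+) t2) && (f (+) t3))) (+) s)
  = sg (f (+) (s (+) t1)) + sg (f (+) (s (+) t2)) + sg (f (+) (s (+) t3)) - sg (f (+) (s (+) t1 (+) t2 (+) t3)).
Proof. by case: f; case: s; case: t1; case: t2; case: t3. Qed.

Lemma walsh_sigma (F : finFieldType) (n : nat) (n0 : (0 < n)%N) (hF : #|F| = (2 ^ n)%N)
  (f : F -> bool) (a1 a2 a3 a : F) :
  2 * walsh n (sigma n f a1 a2 a3) a =
  walsh n f (a + a1) + walsh n f (a + a2) + walsh n f (a + a3) - walsh n f (a + a1 + a2 + a3).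
Proof.
rewrite /walsh big_distrr -!big_split -sumrB /=.
apply: eq_bigr => x _.
rewrite !(mulrDl _ _ x) !(@tr_add F n n0 hF).
exact: (pw2 (f x) (tr n (a * x)) (tr n (a1 * x)) (tr n (a2 * x)) (tr n (a3 * x))).
Qed.

Theorem proposition1 (F : finFieldType) (n k : nat) (hk : (0 < k)%N)
    (hn : n = (2 * k)%N) (hF : #|F| = (2 ^ n)%N)
    (f : F -> bool) (hf : bent n k f) (a1 a2 a3 : F) :
  (bent n k (sigma n f a1 a2 a3) <->
     (forall x, DD (a1 + a2) (a1 + a3) (dual n f) x = false))
  /\ (semibent n k (sigma n f a1 a2 a3) <->
     (forall x, DD (a1 + a2) (a1 + a3) (dual n f) x = true))
  /\ (bent n k (sigma n f a1 a2 a3) ->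
      forall x, dual n (sigma n f a1 a2 a3) x =
        (dual n f (x + a1) && dual n f (x + a2))
        (+) (dual n f (x + a1) && dual n f (x + a3))
        (+) (dual n f (x + a2) && dual n f (x + a3))).
Proof.
have n0 : (0 < n)%N by rewrite hn muln_gt0.
case: k hk hn hf => // k _ hn hf.
set d := dual n f.
set c : int := (2 ^ k)%N%:Z.
have c0 : 0 < c by rewrite /c ltz_nat expn_gt0.
have cn0 : c != 0 by rewrite gt_eqF.
have Wf : forall b, walsh n f b = 2 * c * sg (d b).
  move=> b; have := hf b; rewrite /d /dual /sg /c expnS PoszM.
  case: ltrP => h; rewrite ?expr1 ?expr0 ?mulr1.
    by move/eqP; rewrite ltr0_norm // eqr_oppLR => /eqP ->; rewrite mulrN1.
  by rewrite ger0_norm.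
set s := fun a => S4 (d (a + a1)) (d (a + a2)) (d (a + a3)) (d (a + a1 + a2 + a3)).
have HW : forall a, walsh n (sigma n f a1 a2 a3) a = c * s a.
  move=> a; apply: (@mulfI _ 2) => //.
  rewrite (@walsh_sigma F n n0 hF) !Wf /s /S4; ring.
have ax := @addxx F n hF.
have HDD : forall a, DD (a1 + a2) (a1 + a3) d (a + a1) =
    d (a + a1) (+) d (a + a2) (+) d (a + a3) (+) d (a + a1 + a2 + a3).
  move=> a; rewrite /DD.
  have e2 : a + a1 + (a1 + a2) = a + a2 by rewrite addrA -(addrA a a1 a1) ax addr0.
  have e3 : a + a1 + (a1 + a3) = a + a3 by rewrite addrA -(addrA a a1 a1) ax addr0.
  by rewrite e2 e3 addrA (addrAC a a2 a1).
have HDDy : forall y, DD (a1 + a2) (a1 + a3) d y = DD (a1 + a2) (a1 + a3) d (y + a1 + a1).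
  by move=> y; rewrite -addrA ax addr0.
have bentE : forall a, (`|walsh n (sigma n f a1 a2 a3) a| == (2 ^ k.+1)%N%:Z) = (`|s a| == 2).
  move=> a; rewrite HW normrM gtr0_norm // expnS PoszM mulrC.
  by rewrite (inj_eq (mulIf cn0)).
have semiE : forall a, (walsh n (sigma n f a1 a2 a3) a == 0) || (walsh n (sigma n f a1 a2 a3) a == (2 ^ k.+2)%N%:Z)
      || (walsh n (sigma n f a1 a2 a3) a == - (2 ^ k.+2)%N%:Z) = [|| s a == 0, s a == 4 | s a == -4].
  move=> a; have e4 : (2 ^ k.+2)%N%:Z = c * 4 by rewrite !expnS !PoszM /c; ring.
  by rewrite HW e4 -mulrN -{1}(mulr0 c) !(inj_eq (mulfI cn0)) orbA.
split; last split.
- split.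
  + move=> hb y; rewrite HDDy HDD; have [P1 _ _] := pw (d (y + a1 + a1)) (d (y + a1 + a2)) (d (y + a1 + a3)) (d (y + a1 + a1 + a2 + a3)).
    apply/negbTE; rewrite -P1 -bentE; apply/eqP; exact: hb.
  + move=> hD a; apply/eqP; rewrite bentE; have [P1 _ _] := pw (d (a + a1)) (d (a + a2)) (d (a + a3)) (d (a + a1 + a2 + a3)).
    by rewrite /s P1 -HDD hD.
- split.
  + move=> hb y; rewrite HDDy HDD; have [_ P2 _] := pw (d (y + a1 + a1)) (d (y + a1 + a2)) (d (y + a1 + a3)) (d (y + a1 + a1 + a2 + a3)).
    rewrite -P2; have := semiE (y + a1); rewrite /s => <-.
    by case: (hb (y + a1)) => [->|[->|->]]; rewrite eqxx ?orbT.
  + move=> hD a; have [_ P2 _] := pw (d (a + a1)) (d (a + a2)) (d (a + a3)) (d (a + a1 + a2 + a3)).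
    have := semiE a; rewrite /s P2 -HDD hD.
    by case/orP => [/orP[]|] /eqP ->; auto.
- move=> hb x; have [P1 _ P3] := pw (d (x + a1)) (d (x + a2)) (d (x + a3)) (d (x + a1 + a2 + a3)).
  have hx : DD (a1 + a2) (a1 + a3) d (x + a1) = false.
    apply/negbTE; rewrite HDD -P1 -bentE; apply/eqP; exact: hb.
  rewrite /dual HW pmulr_rlt0 //.
  by rewrite /s P3 // -HDD hx.
Qed.
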